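(* Let $G$ be a cyclic group of order $3$ and $\mathbb{Z}_{(2)} = \{ m/n : m,n\in\mathbb{Z},\ n \text{ odd}\}$. Then the group ring $\mathbb{Z}_{(2)}G$ is strongly clean.
   Context: All rings are associative with identity. An element $x$ of a ring $R$ is strongly clean if $x = e+u$ with $e^2=e$, $u$ a unit, and $eu=ue$; $R$ is strongly clean if every element is. *)

(* Defs.v *)
From HB Require Import structures.
From mathcomp Require Import all_boot all_order all_algebra all_fingroup.
Set Implicit Arguments. Unset Strict Implicit. Unset Printing Implicit Defensive.
Import GRing.Theory.
Local Open Scope ring_scope.

Definition inZ2 (q : rat) : Prop :=
  exists (m n : int), odd `|n|%N /\ q = m%:~R / n%:~R.

(* The group ring S[G] of a finite group G over a subring S of a ring R:
   its elements are the functions G -> R with all coefficients in S,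
   with pointwise addition and convolution product. *)
Definition grelt (R : nzRingType) (gT : finGroupType) (S : R -> Prop)
  (f : {ffun gT -> R}) : Prop := forall g : gT, S (f g).

Definition gradd (R : nzRingType) (gT : finGroupType) (f h : {ffun gT -> R})
  : {ffun gT -> R} := [ffun x => f x + h x].

Definition grmul (R : nzRingType) (gT : finGroupType) (f h : {ffun gT -> R})
  : {ffun gT -> R} := [ffun x => \sum_(y : gT) f y * h (y^-1 * x)%g].

Definition grone (R : nzRingType) (gT : finGroupType) : {ffun gT -> R} :=
  [ffun x => if x == 1%g then 1 else 0].

Definition gr_strongly_clean_elt (R : nzRingType) (gT : finGroupType)
  (S : R -> Prop) (x : {ffun gT -> R}) : Prop :=
  exists e u v : {ffun gT -> R},
    [/\ grelt S e, grelt S u, grelt S v & x = gradd e u] /\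
    [/\ grmul e e = e, grmul u v = grone R gT, grmul v u = grone R gT
      & grmul e u = grmul u e].

Definition gr_strongly_clean (R : nzRingType) (gT : finGroupType)
  (S : R -> Prop) : Prop :=
  forall x : {ffun gT -> R}, grelt S x -> gr_strongly_clean_elt S x.

(* Main.v *)
Require Import Defs.
From HB Require Import structures.
From mathcomp Require Import all_boot all_order all_algebra all_fingroup all_solvable.
From mathcomp Require Import ring.
Set Implicit Arguments. Unset Strict Implicit. Unset Printing Implicit Defensive.
Import GRing.Theory.

Section Par.
Open Scope ring_scope.


Definition par (z : int) : 'Z_2 := z%:~R.

Lemma parE z : par z = (odd `|z|%N)%:R.
Proof.
rewrite /par {1}[z]intEsign rmorphM rmorph_sign /=.
have -> : (-1 : 'Z_2) = 1 by apply/val_inj.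
rewrite expr1n mul1r.
change ((`|z|%N)%:R = (odd `|z|%N)%:R :> 'Z_2).
rewrite !Zp_nat; apply/val_inj => /=; rewrite modn2.
by case: (odd _).
Qed.

Definition Ech (a b c : bool) : int * int * int :=
  match a, b, c with
  | false, false, false => (3, 0, 0)
  | true, true, false => (3, 0, 0)
  | true, false, true => (3, 0, 0)
  | false, true, true => (1, 1, 1)
  | true, true, true => (2, -1, -1)
  | _, _, _ => (0, 0, 0)
  end.

Definition cub (p q r : int) : int := p * p * p + q * q * q + r * r * r - 3 * p * q * r.

Lemma par1 z : par z = 1 -> odd `|z|%N.
Proof. by rewrite parE; case: (odd _) => // /(congr1 val). Qed.

Lemma key (A0 A1 A2 D : int) : odd `|D|%N ->
  odd `|cub (3 * A0 - (Ech (odd `|A0|%N) (odd `|A1|%N) (odd `|A2|%N)).1.1 * D)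
            (3 * A1 - (Ech (odd `|A0|%N) (odd `|A1|%N) (odd `|A2|%N)).1.2 * D)
            (3 * A2 - (Ech (odd `|A0|%N) (odd `|A1|%N) (odd `|A2|%N)).2 * D)|%N.
Proof.
move=> oD; apply: par1.
rewrite /cub /par !(intrD, intrM, intrN).
rewrite -[(A0%:~R : 'Z_2)]/(par A0) -[(A1%:~R : 'Z_2)]/(par A1).
rewrite -[(A2%:~R : 'Z_2)]/(par A2) -[(D%:~R : 'Z_2)]/(par D) !parE oD.
by case: (odd `|A0|%N); case: (odd `|A1|%N); case: (odd `|A2|%N); apply/val_inj.
Qed.

Lemma circ_inv (U0 U1 U2 d : rat) :
  d = U0 * U0 * U0 + U1 * U1 * U1 + U2 * U2 * U2 - 3 * U0 * U1 * U2 -> d != 0 ->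
  let V0 := (U0 * U0 - U1 * U2) / d in
  let V1 := (U2 * U2 - U0 * U1) / d in
  let V2 := (U1 * U1 - U0 * U2) / d in
  [/\ U0 * V0 + U1 * V2 + U2 * V1 = 1, U0 * V1 + U1 * V0 + U2 * V2 = 0 &
      U0 * V2 + U1 * V1 + U2 * V0 = 0].
Proof. move=> -> nz V0 V1 V2; rewrite /V0 /V1 /V2; split; field => //. Qed.

Lemma inZ2_int_div (a b : int) : odd `|b|%N -> inZ2 (a%:~R / b%:~R).
Proof. by move=> ob; exists a, b. Qed.

Lemma odd_nz (z : int) : odd `|z|%N -> (z%:~R : rat) != 0.
Proof. by move=> oz; rewrite intr_eq0; apply: contraTneq oz => ->. Qed.

Lemma idemE (a b c : bool) :
  let E := Ech a b c in
  let f0 : rat := E.1.1%:~R / 3 in let f1 : rat := E.1.2%:~R / 3 in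
  let f2 : rat := E.2%:~R / 3 in
  [/\ f0 * f0 + f1 * f2 + f2 * f1 = f0, f0 * f1 + f1 * f0 + f2 * f2 = f1 &
      f0 * f2 + f1 * f1 + f2 * f0 = f2].
Proof. by case: a; case: b; case: c; rewrite /=; split; field. Qed.

End Par.

Section Grp.

Variables (gT : finGroupType) (g : gT).
Hypothesis Hord : #[g]%g = 3.
Hypothesis Hgen : forall y, y \in <[g]>%g.
Lemma exp_inv_mul i k : i < 3 -> k < 3 ->
  ((g ^+ i)^-1 * g ^+ k = g ^+ ((3 - i + k) %% 3))%g.
Proof.
move=> hi hk.
rewrite -[in RHS]Hord expg_mod_order expgD.
congr (_ * _)%g.
rewrite Hord.
apply/eqP; rewrite eq_invg_mul -expgD.
rewrite (subnKC (ltnW hi)).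
by rewrite -Hord expg_order.
Qed.

Local Notation gp i := (g ^+ i)%g.

Lemma sum3 (F : gT -> rat) :
  (\sum_(y : gT) F y = F (gp 0) + F (gp 1) + F (gp 2))%R.
Proof.
have bij : bijective (fun i : 'I_3 => (gp i)).
  apply: inj_card_bij.
    move=> i j /eqP; rewrite eq_expg_mod_order Hord.
    rewrite !modn_small ?ltn_ord //.
    by move/eqP; apply: val_inj.
  rewrite card_ord -Hord.
  apply: subset_leq_card; apply/subsetP => y _; exact: Hgen.
rewrite (reindex _ (onW_bij _ bij)) /=.
by rewrite !big_ord_recr big_ord0 /= GRing.add0r.
Qed.

Lemma grmulE (f h : {ffun gT -> rat}) k : k < 3 ->
  grmul f h (gp k) = (f (gp 0) * h (gp ((3 - 0 + k) %% 3)) +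
     f (gp 1) * h (gp ((3 - 1 + k) %% 3)) +
     f (gp 2) * h (gp ((3 - 2 + k) %% 3)))%R.
Proof. move=> hk; rewrite ffunE sum3 !exp_inv_mul //. Qed.

Lemma ffun3 (f h : {ffun gT -> rat}) :
  f (gp 0) = h (gp 0) -> f (gp 1) = h (gp 1) ->
  f (gp 2) = h (gp 2) -> f = h.
Proof.
move=> h0 h1 h2; apply/ffunP => y.
have [i lt ->] := cyclePmin (Hgen y); rewrite Hord in lt.
by case: i lt => [|[|[|]]].
Qed.

Lemma grelt3 (S : rat -> Prop) (f : {ffun gT -> rat}) :
  S (f (gp 0)) -> S (f (gp 1)) -> S (f (gp 2)) -> grelt S f.
Proof.
move=> h0 h1 h2 y.
have [i lt ->] := cyclePmin (Hgen y); rewrite Hord in lt.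
by case: i lt => [|[|[|]]].
Qed.

Definition mk (a b c : rat) : {ffun gT -> rat} :=
  [ffun y => if y == (gp 0) then a else if y == (gp 1) then b else c].

Lemma mkE a b c : [/\ mk a b c (gp 0) = a, mk a b c (gp 1) = b &
   mk a b c (gp 2) = c].
Proof.
by rewrite !ffunE !eq_expg_mod_order Hord.
Qed.


Open Scope ring_scope.

Lemma grone3 : [/\ grone rat gT (gp 0) = 1, grone rat gT (gp 1) = 0 &
   grone rat gT (gp 2) = 0].
Proof.
have g1 : (1 = gp 0)%g by rewrite expg0.
by rewrite !ffunE g1 !eq_expg_mod_order Hord.
Qed.

Lemma main_elt (x : {ffun gT -> rat}) : grelt inZ2 x -> gr_strongly_clean_elt inZ2 x.
Proof.
move=> Hx.
have [m0 [n0 [on0 x0]]] := Hx (gp 0).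
have [m1 [n1 [on1 x1]]] := Hx (gp 1).
have [m2 [n2 [on2 x2]]] := Hx (gp 2).
pose D := n0 * n1 * n2.
have oD : odd `|D|%N by rewrite /D !abszM !oddM on0 on1 on2.
pose A0 := m0 * n1 * n2. pose A1 := m1 * n0 * n2. pose A2 := m2 * n0 * n1.
have nD := odd_nz oD.
have n0z := odd_nz on0. have n1z := odd_nz on1. have n2z := odd_nz on2.
have xA0 : x (gp 0) = A0%:~R / D%:~R.
  by rewrite x0 /A0 /D !intrM; field; rewrite ?n0z ?n1z ?n2z.
have xA1 : x (gp 1) = A1%:~R / D%:~R.
  by rewrite x1 /A1 /D !intrM; field; rewrite ?n0z ?n1z ?n2z.
have xA2 : x (gp 2) = A2%:~R / D%:~R.
  by rewrite x2 /A2 /D !intrM; field; rewrite ?n0z ?n1z ?n2z.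
have oP := key A0 A1 A2 oD.
move: oP.
set E := Ech _ _ _.
set B0 := 3 * A0 - E.1.1 * D.
set B1 := 3 * A1 - E.1.2 * D.
set B2 := 3 * A2 - E.2 * D.
move=> oP.
pose e := mk (E.1.1%:~R / 3) (E.1.2%:~R / 3) (E.2%:~R / 3).
have [e0 e1 e2] := mkE (E.1.1%:~R / 3) (E.1.2%:~R / 3) (E.2%:~R / 3).
pose u := [ffun y => x y - e y].
have n3D : ((3 * D)%:~R : rat) != 0.
  by apply: odd_nz; rewrite abszM oddM oD.
have uB0 : u (gp 0) = B0%:~R / (3 * D)%:~R.
  rewrite ffunE e0 xA0 /B0 !(intrM, intrD, intrN).
  field; rewrite ?n0z ?n1z ?n2z //.
have uB1 : u (gp 1) = B1%:~R / (3 * D)%:~R.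
  rewrite ffunE e1 xA1 /B1 !(intrM, intrD, intrN).
  field; rewrite ?n0z ?n1z ?n2z //.
have uB2 : u (gp 2) = B2%:~R / (3 * D)%:~R.
  rewrite ffunE e2 xA2 /B2 !(intrM, intrD, intrN).
  field; rewrite ?n0z ?n1z ?n2z //.
have xeu : x = gradd e u by apply/ffunP => y; rewrite !ffunE addrC subrK.
have [i0 i1 i2] := idemE (odd `|A0|%N) (odd `|A1|%N) (odd `|A2|%N).
rewrite -/E in i0 i1 i2.
clearbody B0 B1 B2 D A0 A1 A2 E.
pose Pz : int := cub B0 B1 B2.
have oPz : odd `|Pz|%N := oP.
have nP : (Pz%:~R : rat) != 0 := odd_nz oP.
pose det := u (gp 0) * u (gp 0) * u (gp 0) + u (gp 1) * u (gp 1) * u (gp 1)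
   + u (gp 2) * u (gp 2) * u (gp 2) - 3 * u (gp 0) * u (gp 1) * u (gp 2).
have detE : det = Pz%:~R / ((3 * D)%:~R ^+ 3).
  rewrite /det /Pz uB0 uB1 uB2 /cub !(intrD, intrM, intrN).
  move: n3D; rewrite intrM => n3D.
  field; rewrite ?nD ?n3D //.
clearbody Pz.
have detnz : det != 0.
  by rewrite detE mulf_neq0 ?invr_eq0 ?expf_neq0.
have [c0 c1 c2] := circ_inv (U0 := u (gp 0)) (U1 := u (gp 1)) (U2 := u (gp 2))
   (erefl det) detnz.
pose v := mk ((u (gp 0) * u (gp 0) - u (gp 1) * u (gp 2)) / det)
             ((u (gp 2) * u (gp 2) - u (gp 0) * u (gp 1)) / det)
             ((u (gp 1) * u (gp 1) - u (gp 0) * u (gp 2)) / det).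
have [v0 v1 v2] := mkE ((u (gp 0) * u (gp 0) - u (gp 1) * u (gp 2)) / det)
             ((u (gp 2) * u (gp 2) - u (gp 0) * u (gp 1)) / det)
             ((u (gp 1) * u (gp 1) - u (gp 0) * u (gp 2)) / det).
have [o0 o1 o2] := grone3.
have o3 : odd `|(3 * D)%R|%N by rewrite abszM oddM oD.
have inv_form (p q r : int) :
   inZ2 ((p%:~R / (3 * D)%:~R * (p%:~R / (3 * D)%:~R) -
          q%:~R / (3 * D)%:~R * (r%:~R / (3 * D)%:~R)) /
         (Pz%:~R / (3 * D)%:~R ^+ 3)).
  have -> : (p%:~R / (3 * D)%:~R * (p%:~R / (3 * D)%:~R) -
          q%:~R / (3 * D)%:~R * (r%:~R / (3 * D)%:~R)) /
         (Pz%:~R / (3 * D)%:~R ^+ 3) =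
         ((3 * D) * (p * p - q * r))%:~R / Pz%:~R :> rat.
    by rewrite !(intrM, intrD, intrN); field; rewrite ?nP ?nD.
  exact: inZ2_int_div.
exists e, u, v; split; first split.
- apply: grelt3; rewrite ?e0 ?e1 ?e2; exact: (inZ2_int_div _ (b:=3)).
- by apply: grelt3; rewrite ?uB0 ?uB1 ?uB2; apply: inZ2_int_div.
- apply: grelt3; rewrite ?v0 ?v1 ?v2 detE uB0 uB1 uB2; exact: inv_form.
- exact: xeu.
split.
- by apply: ffun3; rewrite grmulE //= ?e0 ?e1 ?e2.
- by apply: ffun3; rewrite grmulE //= ?v0 ?v1 ?v2 ?o0 ?o1 ?o2.
- apply: ffun3; rewrite grmulE //= ?v0 ?v1 ?v2 ?o0 ?o1 ?o2.
  + by rewrite -[RHS]c0; ring.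
  + by rewrite -[RHS]c1; ring.
  + by rewrite -[RHS]c2; ring.
- by apply: ffun3; rewrite !grmulE //=; ring.
Qed.


End Grp.

Close Scope ring_scope.

Theorem corollary1p14 (gT : finGroupType) :
  cyclic [set: gT] -> #|[set: gT]| = 3 ->
  @gr_strongly_clean rat gT inZ2.
Proof.
move=> /cyclicP [g Hg] Hc.
have Hord : #[g]%g = 3 by rewrite /order -Hg.
have Hgen : forall y, y \in <[g]>%g by move=> y; rewrite -Hg inE.
move=> x Hx; exact: (main_elt Hord Hgen Hx).
Qed.
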